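(* Let $X$ be a non-empty set, $\sigma : X \to X$ a bijection, and $A \subseteq \mathbb{C}^X$ a subalgebra (under pointwise operations) such that $h\circ\sigma \in A$ and $h \circ \sigma^{-1} \in A$ for all $h \in A$. Let $\widetilde{\sigma} : A \to A$ be the automorphism $\widetilde{\sigma}(f) = f\circ \sigma^{-1}$. Then the unique maximal abelian subalgebra of $A \rtimes_{\widetilde{\sigma}} \mathbb{Z}$ containing $A$ (namely the commutant $A'$ of $A$) is precisely \[ A' = \Big\{ \sum_{n\in\mathbb{Z}} f_n\delta^n \in A \rtimes_{\widetilde{\sigma}}\mathbb{Z} \;:\; \text{for all } n \in \mathbb{Z},\ f_n \text{ vanishes identically on } \mathrm{Sep}_A^n(X)\Big\}. \]
   Context: For $n \in \mathbb{Z}$, $\mathrm{Sep}_A^n(X) = \{x \in X : \exists h \in A \text{ with } h(x) \neq \widetilde{\sigma}^n(h)(x)\}$ (for $n=0$ this set is empty). The crossed product $A \rtimes_{\widetilde{\sigma}} \mathbb{Z}$ is the set of finitely supported functions $f:\mathbb{Z}\to A$, written $f=\sum_n f_n\delta^n$, with pointwise addition and scalar multiplication and multiplication $(f*g)(n)=\sum_{k} f(k)\cdot\widetilde{\sigma}^k(g(n-k))$, i.e. $(f_n\delta^n)*(g_m\delta^m)=f_n\,\widetilde{\sigma}^n(g_m)\,\delta^{n+m}$. $A$ is regarded as the subalgebra $\{f_0\delta^0 : f_0 \in A\}$. *)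

(* Defs.v *)
From mathcomp Require Import all_boot all_order all_algebra.
From mathcomp.real_closed Require Import complex.
From mathcomp Require Import Rstruct.
Set Implicit Arguments. Unset Strict Implicit. Unset Printing Implicit Defensive.
Import Order.TTheory GRing.Theory Num.Theory.
Local Open Scope ring_scope.

Notation CC := (complex Rdefinitions.R).

Section Defs.
Variable X : Type.

Definition is_subalgebra (A : (X -> CC) -> Prop) : Prop :=
  [/\ A (fun _ => 0),
      (forall f g, A f -> A g -> A (fun x => f x + g x)),
      (forall (c : CC) f, A f -> A (fun x => c * f x)) &
      (forall f g, A f -> A g -> A (fun x => f x * g x))].

Definition iterz (s si : X -> X) (k : int) : X -> X :=
  match k with
  | Posz n => iter n s
  | Negz n => iter n.+1 si
  end.

(* tilde-sigma^k (h) = h o sigma^{-k}  (since tilde-sigma(h) = h o sigma^{-1}) *)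
Definition tsig (s si : X -> X) (k : int) (h : X -> CC) : X -> CC :=
  fun x => h (iterz s si (- k) x).

Definition Sep (A : (X -> CC) -> Prop) (s si : X -> X) (n : int) (x : X) : Prop :=
  exists h, A h /\ h x <> tsig s si n h x.

(* Elements of the crossed product: coefficient families f_n together with a
   bound N such that f_n = 0 for |n| > N (finite support). *)
Record cp := CP { cp_bnd : nat; cp_coef : int -> X -> CC }.

Definition in_cp (A : (X -> CC) -> Prop) (f : cp) : Prop :=
  (forall n, A (cp_coef f n)) /\
  (forall n, (cp_bnd f < absz n)%N -> cp_coef f n = (fun _ => 0)).

(* (f * g)(n) = sum_k f(k) . tilde-sigma^k (g(n-k)), k ranging over the
   support bound [-N, N] of f. *)
Definition cp_mul (s si : X -> X) (f g : cp) : cp :=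
  CP (cp_bnd f + cp_bnd g)
    (fun n x => \sum_(i < (cp_bnd f).*2.+1)
        let k := (i%:Z - (cp_bnd f)%:Z)%R in
        cp_coef f k x * tsig s si k (cp_coef g (n - k)) x).

Definition cp_of (a : X -> CC) : cp :=
  CP 0 (fun n => if n == 0 then a else (fun _ => 0)).

Definition cp_eq (f g : cp) : Prop := forall n, cp_coef f n = cp_coef g n.

Definition in_commutant (A : (X -> CC) -> Prop) (s si : X -> X) (f : cp) : Prop :=
  in_cp A f /\
  forall a, A a -> cp_eq (cp_mul s si f (cp_of a)) (cp_mul s si (cp_of a) f).

End Defs.

(* Main.v *)
Require Import Defs.
From mathcomp Require Import all_boot all_order all_algebra.
From mathcomp.real_closed Require Import complex.
From mathcomp Require Import Rstruct.
From mathcomp Require Import zify.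
From Stdlib Require Import FunctionalExtensionality Classical_Prop.
Import GRing.Theory.
Local Open Scope ring_scope.

Lemma mulR (X : Type) s si A (f : cp X) a n x : in_cp A f ->
  cp_coef (cp_mul s si f (cp_of a)) n x = cp_coef f n x * tsig s si n a x.
Proof.
move=> [_ Hz] /=.
have E : forall i : 'I_(cp_bnd f).*2.+1,
   cp_coef f (i%:Z - (cp_bnd f)%:Z) x *
     tsig s si (i%:Z - (cp_bnd f)%:Z)
       (if n - (i%:Z - (cp_bnd f)%:Z) == 0 then a else fun _ => 0) x
   = if (i%:Z - (cp_bnd f)%:Z == n) then cp_coef f n x * tsig s si n a x else 0.
  move=> i; rewrite subr_eq0 eq_sym; case: eqP => [->//|_].
  by rewrite /tsig mulr0.
rewrite (eq_bigr _ (fun i _ => E i)).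
case: (leqP (absz n) (cp_bnd f)) => Hn.
  have Hi : (absz (n + (cp_bnd f)%:Z)%R < (cp_bnd f).*2.+1)%N by lia.
  rewrite (bigD1 (Ordinal Hi)) //= big1.
    have -> : ((absz (n + (cp_bnd f)%:Z)%R)%:Z - (cp_bnd f)%:Z == n) by apply/eqP; lia.
    by rewrite addr0.
  move=> i Hne; case: eqP => // Heq; exfalso; move/eqP: Hne; apply; apply: val_inj => /=; lia.
rewrite Hz // big1 ?mul0r // => i _; case: eqP => // Heq; lia.
Qed.

Lemma mulL (X : Type) s si (f : cp X) a n x :
  cp_coef (cp_mul s si (cp_of a) f) n x = a x * cp_coef f n x.
Proof.
by rewrite /= big_ord1 /= subrr /tsig oppr0 subr0.
Qed.

Theorem theorem3p3
  (X : Type) (x0 : X) (sigma sigmainv : X -> X)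
  (Hs1 : cancel sigma sigmainv) (Hs2 : cancel sigmainv sigma)
  (A : (X -> CC) -> Prop) (HA : is_subalgebra A)
  (HAs : forall h, A h -> A (fun x => h (sigma x)))
  (HAsi : forall h, A h -> A (fun x => h (sigmainv x))) :
  forall f : cp X,
    in_commutant A sigma sigmainv f <->
    (in_cp A f /\
     forall (n : int) (x : X), Sep A sigma sigmainv n x -> cp_coef f n x = 0).
Proof.
move=> f; split.
  move=> [Hf Hc]; split => // n x [h [Ah Hne]].
  have E : cp_coef (cp_mul sigma sigmainv f (cp_of h)) n x =
           cp_coef (cp_mul sigma sigmainv (cp_of h) f) n x by rewrite (Hc h Ah n).
  rewrite (mulR _ _ _ _ _ _ _ _ Hf) mulL in E.
  move/eqP: E; rewrite mulrC -subr_eq0 -mulrBl mulf_eq0 subr_eq0 => /orP [/eqP E|/eqP //].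
  by exfalso; apply: Hne.
move=> [Hf HS]; split => // a Aa n; apply: functional_extensionality => x.
have := mulR _ _ _ _ _ _ _ _ Hf; rewrite /= => ->.
have := mulL _ _ _ f a n x; rewrite /= => ->.
have [E|Hne] := Classical_Prop.classic (a x = tsig sigma sigmainv n a x).
  by rewrite -E mulrC.
have -> : cp_coef f n x = 0 by apply: HS; exists a; split.
by rewrite mul0r mulr0.
Qed.
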